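(* Let $A$ be a sequence algebra, $P\ne0$ a homogeneous normed $A$-module of finite type with each $P_n$ identified isometrically with $l_1^0(\Lambda_n)$, with natural basis $\{e^n_\nu:\nu\in\Lambda_n\}$. Let $S$ be the unit sphere of $P$ and $E(S)$ the set of $z\in S$ such that for every $n$, $z_n$ is a scalar multiple of $e^n_\nu$ for some $\nu\in\Lambda_n$. Then for every normed $A$-module $X$ and every bounded morphism $\varphi:P\to X$, $\|\varphi\|=\sup\{\|\varphi(z)\|:z\in E(S)\}$.
   Context: Modules are contractive ($\|a\cdot x\|\le\|a\|\|x\|$); morphisms are bounded $A$-module maps. $l_1^0(\Lambda)$: finitely supported functions on $\Lambda$ with the $l_1$-norm; its natural basis consists of indicator functions of points. A sequence algebra is a normed algebra of complex sequences with coordinatewise operations containing $c_{00}$ as a dense subalgebra, with $\|\mathbf p^n\|=1$, where $\mathbf p^n$ has $1$ in place $n$ and $0$ elsewhere. $x_n:=\mathbf p^n\cdot x$, $P_n:=\{\mathbf p^n\cdot x\}$. Homogeneous: $\|x_n\|\le\|y_n\|$ for all $n$ implies $\|x\|\le\|y\|$. Finite type: for each $x$, $x_n=0$ for large $n$. *)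

(* Defs.v *)
From Stdlib Require Import Reals List ClassicalEpsilon.
Open Scope R_scope.

Definition Cpx : Type := (R * R)%type.
Definition C0 : Cpx := (0, 0).
Definition C1 : Cpx := (1, 0).
Definition Cplus (z w : Cpx) : Cpx := (fst z + fst w, snd z + snd w).
Definition Copp (z : Cpx) : Cpx := (- fst z, - snd z).
Definition Cmult (z w : Cpx) : Cpx :=
  (fst z * fst w - snd z * snd w, fst z * snd w + snd z * fst w).
Definition Cabs (z : Cpx) : R := sqrt (fst z * fst z + snd z * snd z).

Definition seqC := nat -> Cpx.
Definition sadd (a b : seqC) : seqC := fun n => Cplus (a n) (b n).
Definition sopp (a : seqC) : seqC := fun n => Copp (a n).
Definition smul (a b : seqC) : seqC := fun n => Cmult (a n) (b n).
Definition sscal (c : Cpx) (a : seqC) : seqC := fun n => Cmult c (a n).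
Definition szero : seqC := fun _ => C0.
Definition in_c00 (a : seqC) : Prop := exists N, forall n, (N <= n)%nat -> a n = C0.
Definition pn (n : nat) : seqC := fun k => if Nat.eq_dec k n then C1 else C0.

Record SeqAlg := {
  amem : seqC -> Prop;
  anorm : seqC -> R;
  amem_add : forall a b, amem a -> amem b -> amem (sadd a b);
  amem_scal : forall c a, amem a -> amem (sscal c a);
  amem_mul : forall a b, amem a -> amem b -> amem (smul a b);
  amem_c00 : forall a, in_c00 a -> amem a;
  anorm_nonneg : forall a, amem a -> 0 <= anorm a;
  anorm_eq0 : forall a, amem a -> anorm a = 0 -> forall n, a n = C0;
  anorm_scal : forall c a, amem a -> anorm (sscal c a) = Cabs c * anorm a;
  anorm_triangle : forall a b, amem a -> amem b ->
      anorm (sadd a b) <= anorm a + anorm b;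
  anorm_submult : forall a b, amem a -> amem b ->
      anorm (smul a b) <= anorm a * anorm b;
  a_c00_dense : forall a, amem a -> forall eps, 0 < eps ->
      exists b, in_c00 b /\ anorm (sadd a (sopp b)) < eps;
  anorm_pn : forall n, anorm (pn n) = 1
}.

Record NSpace := {
  vcar :> Type;
  vzero : vcar;
  vadd : vcar -> vcar -> vcar;
  vopp : vcar -> vcar;
  vscal : Cpx -> vcar -> vcar;
  vnorm : vcar -> R;
  vadd_assoc : forall x y z, vadd x (vadd y z) = vadd (vadd x y) z;
  vadd_comm : forall x y, vadd x y = vadd y x;
  vadd_0 : forall x, vadd x vzero = x;
  vadd_opp : forall x, vadd x (vopp x) = vzero;
  vscal_1 : forall x, vscal C1 x = x;
  vscal_assoc : forall c d x, vscal c (vscal d x) = vscal (Cmult c d) x;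
  vscal_distr_v : forall c x y, vscal c (vadd x y) = vadd (vscal c x) (vscal c y);
  vscal_distr_c : forall c d x, vscal (Cplus c d) x = vadd (vscal c x) (vscal d x);
  vnorm_nonneg : forall x, 0 <= vnorm x;
  vnorm_eq0 : forall x, vnorm x = 0 -> x = vzero;
  vnorm_scal : forall c x, vnorm (vscal c x) = Cabs c * vnorm x;
  vnorm_triangle : forall x y, vnorm (vadd x y) <= vnorm x + vnorm y
}.
Arguments vzero {_}. Arguments vadd {_}. Arguments vopp {_}.
Arguments vscal {_}. Arguments vnorm {_}.

Record NModule (A : SeqAlg) := {
  msp :> NSpace;
  act : seqC -> msp -> msp;
  act_add_v : forall a x y, amem A a -> act a (vadd x y) = vadd (act a x) (act a y);
  act_add_a : forall a b x, amem A a -> amem A b ->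
      act (sadd a b) x = vadd (act a x) (act b x);
  act_scal_a : forall c a x, amem A a -> act (sscal c a) x = vscal c (act a x);
  act_scal_v : forall c a x, amem A a -> act a (vscal c x) = vscal c (act a x);
  act_mul : forall a b x, amem A a -> amem A b ->
      act (smul a b) x = act a (act b x);
  act_contractive : forall a x, amem A a -> vnorm (act a x) <= anorm A a * vnorm x
}.
Arguments act {_ _}.

Definition is_bounded_morphism {A : SeqAlg} (P X : NModule A) (phi : P -> X) : Prop :=
  (forall x y, phi (vadd x y) = vadd (phi x) (phi y)) /\
  (forall c x, phi (vscal c x) = vscal c (phi x)) /\
  (forall a x, amem A a -> phi (act a x) = act a (phi x)) /\
  (exists K, forall x, vnorm (phi x) <= K * vnorm x).

Definition homogeneous {A : SeqAlg} (P : NModule A) : Prop :=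
  forall x y : P, (forall n, vnorm (act (pn n) x) <= vnorm (act (pn n) y)) ->
    vnorm x <= vnorm y.
Definition finite_type {A : SeqAlg} (P : NModule A) : Prop :=
  forall x : P, exists N, forall n, (N <= n)%nat -> act (pn n) x = vzero.

Definition fin_supp {L : Type} (f : L -> Cpx) : Prop :=
  exists l : list L, forall nu, f nu <> C0 -> In nu l.
Definition l1norm_is {L : Type} (f : L -> Cpx) (r : R) : Prop :=
  exists l : list L, NoDup l /\ (forall nu, f nu <> C0 -> In nu l) /\
    r = fold_right (fun nu s => Cabs (f nu) + s) 0 l.
Definition delta {L : Type} (nu : L) : L -> Cpx :=
  fun mu => if excluded_middle_informative (mu = nu) then C1 else C0.

(* T is a linear isometric bijection from l_1^0(L) onto P_n = {p^n . x} *)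
Definition isometric_ident {A : SeqAlg} (P : NModule A) (n : nat) (L : Type)
    (T : (L -> Cpx) -> P) : Prop :=
  (forall f g, fin_supp f -> fin_supp g ->
     T (fun nu => Cplus (f nu) (g nu)) = vadd (T f) (T g)) /\
  (forall c f, fin_supp f -> T (fun nu => Cmult c (f nu)) = vscal c (T f)) /\
  (forall f, fin_supp f -> exists x : P, T f = act (pn n) x) /\
  (forall x : P, exists f, fin_supp f /\ T f = act (pn n) x) /\
  (forall f, fin_supp f -> l1norm_is f (vnorm (T f))).

Definition ES {A : SeqAlg} (P : NModule A) (Lam : nat -> Type)
    (T : forall n, (Lam n -> Cpx) -> P) (z : P) : Prop :=
  vnorm z = 1 /\
  forall n, act (pn n) z = vzero \/
    exists (nu : Lam n) (c : Cpx), act (pn n) z = vscal c (T n (delta nu)).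

(* Main.v *)
Require Import Defs.
From Stdlib Require Import Reals Lra Lia List ClassicalEpsilon Classical FunctionalExtensionality.
Require Import Defs.
Open Scope R_scope.

Definition rsum {L} (F : L -> R) (l : list L) := fold_right (fun v s => F v + s) 0 l.
Definition vsum {V : NSpace} {L} (F : L -> V) (l : list L) : V :=
  fold_right (fun v acc => vadd (F v) acc) vzero l.

Lemma Cabs_real r : Cabs (r, 0) = Rabs r.
Proof. unfold Cabs; simpl. replace (r*r+0*0) with (Rsqr r) by (unfold Rsqr; ring).
apply sqrt_Rsqr_abs. Qed.
Lemma Cabs_C0 : Cabs C0 = 0.
Proof. unfold C0. rewrite Cabs_real. apply Rabs_R0. Qed.
Lemma Cabs_C1 : Cabs C1 = 1.
Proof. unfold C1. rewrite Cabs_real. apply Rabs_R1. Qed.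

Section V.
Variable V : NSpace.
Lemma vscal_C0 (x : V) : vscal C0 x = vzero.
Proof. apply vnorm_eq0. rewrite vnorm_scal, Cabs_C0. ring. Qed.
Lemma vnorm_zero : vnorm (@vzero V) = 0.
Proof. rewrite <- (vscal_C0 vzero). rewrite vnorm_scal, Cabs_C0. ring. Qed.
Lemma vscal_zero c : vscal c (@vzero V) = vzero.
Proof. apply vnorm_eq0. rewrite vnorm_scal, vnorm_zero. ring. Qed.
Lemma vadd_0l (x : V) : vadd vzero x = x.
Proof. rewrite vadd_comm. apply vadd_0. Qed.
Lemma vminus_self (y : V) : vadd y (vscal (-1,0) y) = vzero.
Proof. transitivity (vadd (vscal C1 y) (vscal (-1,0) y)). rewrite vscal_1; auto.
rewrite <- vscal_distr_c. replace (Cplus C1 (-1,0)) with C0. apply vscal_C0.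
unfold Cplus, C1, C0; simpl; f_equal; ring. Qed.
Lemma vsplit (x y : V) : vadd (vadd x (vscal (-1,0) y)) y = x.
Proof. rewrite <- vadd_assoc. rewrite (vadd_comm _ (vscal _ y)), vminus_self. apply vadd_0. Qed.
Lemma vswap4 (p q r t : V) : vadd (vadd p q) (vadd r t) = vadd (vadd p r) (vadd q t).
Proof. rewrite <- !vadd_assoc. f_equal. rewrite !vadd_assoc. f_equal. apply vadd_comm. Qed.
Lemma vnorm_sum {L} (F : L -> V) l : vnorm (vsum F l) <= rsum (fun v => vnorm (F v)) l.
Proof. induction l; simpl. rewrite vnorm_zero; lra.
eapply Rle_trans. apply vnorm_triangle. lra. Qed.
Lemma vscal_sum {L} c (F : L -> V) l : vscal c (vsum F l) = vsum (fun v => vscal c (F v)) l.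
Proof. induction l; simpl. apply vscal_zero. rewrite vscal_distr_v, IHl. auto. Qed.
Lemma key {L} (a : L -> R) c (u : L -> V) (w : V) l :
  vadd (vscal (rsum a l, 0) w) (vsum (fun v => vscal (c,0) (u v)) l)
  = vsum (fun v => vadd (vscal (a v, 0) w) (vscal (c,0) (u v))) l.
Proof. induction l; simpl.
- change (0,0) with C0. rewrite vscal_C0. apply vadd_0.
- replace (a a0 + rsum a l, 0) with (Cplus (a a0, 0) (rsum a l, 0))
    by (unfold Cplus; simpl; f_equal; ring).
  rewrite vscal_distr_c, vswap4. unfold rsum, vsum in *. rewrite IHl. auto. Qed.
End V.

Lemma rsum_bound {L} (F a : L -> R) c l : (forall v, In v l -> F v <= a v * c) ->
  rsum F l <= rsum a l * c.
Proof. induction l; simpl; intros H. lra.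
rewrite Rmult_plus_distr_r. assert (F a0 <= a a0 * c) by auto.
assert (rsum F l <= rsum a l * c) by auto. unfold rsum in *; lra. Qed.

Lemma pn_c00 n : in_c00 (pn n).
Proof. exists (S n). intros k Hk. unfold pn. destruct Nat.eq_dec; [lia|auto]. Qed.
Lemma pn_mem A n : amem A (pn n).
Proof. apply amem_c00, pn_c00. Qed.
Lemma pn_mul_same n : smul (pn n) (pn n) = pn n.
Proof. apply functional_extensionality; intro k; unfold smul, pn.
destruct Nat.eq_dec; unfold Cmult, C1, C0; simpl; f_equal; ring. Qed.
Lemma pn_mul_diff m n : m <> n -> smul (pn m) (pn n) = sscal C0 (pn 0).
Proof. intro H. apply functional_extensionality; intro k; unfold smul, sscal, pn.
destruct (Nat.eq_dec k m), (Nat.eq_dec k n), (Nat.eq_dec k 0); try lia;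
unfold Cmult, C1, C0; simpl; f_equal; ring. Qed.

Section M.
Variable A : SeqAlg.
Variable P : NModule A.
Lemma act_idem n (x : P) : act (pn n) (act (pn n) x) = act (pn n) x.
Proof. rewrite <- act_mul by apply pn_mem. rewrite pn_mul_same; auto. Qed.
Lemma act_orth m n (x : P) : m <> n -> act (pn m) (act (pn n) x) = vzero.
Proof. intro H. rewrite <- act_mul by apply pn_mem. rewrite pn_mul_diff by auto.
rewrite act_scal_a by apply pn_mem. apply vscal_C0. Qed.
Lemma act_vadd m (x y : P) : act (pn m) (vadd x y) = vadd (act (pn m) x) (act (pn m) y).
Proof. apply act_add_v, pn_mem. Qed.
Lemma act_vscal m c (x : P) : act (pn m) (vscal c x) = vscal c (act (pn m) x).
Proof. apply act_scal_v, pn_mem. Qed.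
Lemma act_vzero m : act (pn m) (@vzero P) = vzero.
Proof. transitivity (act (pn m) (vscal C0 (@vzero P))). rewrite vscal_C0; auto.
rewrite act_vscal. apply vscal_C0. Qed.
End M.

Lemma delta_fs {L} (v : L) : fin_supp (delta v).
Proof. exists (v :: nil). intros mu H. unfold delta in H.
destruct excluded_middle_informative; [subst; left; auto | contradiction]. Qed.
Lemma sdelta_fs {L} c (v : L) : fin_supp (fun mu => Cmult c (delta v mu)).
Proof. exists (v :: nil). intros mu H. unfold delta in H.
destruct excluded_middle_informative; [subst; left; auto | ].
exfalso; apply H; unfold Cmult, C0; simpl; f_equal; ring. Qed.
Lemma zero_fs {L} : fin_supp (fun _ : L => C0).
Proof. exists nil. intros mu H; contradiction. Qed.

Lemma fold_delta0 {L} (v : L) l : ~ In v l -> rsum (fun mu => Cabs (delta v mu)) l = 0.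
Proof. induction l; simpl; intros H; auto.
unfold delta at 1; destruct excluded_middle_informative.
subst; exfalso; apply H; left; auto. rewrite Cabs_C0. rewrite IHl by tauto. ring. Qed.
Lemma fold_delta1 {L} (v : L) l : NoDup l -> rsum (fun mu => Cabs (delta v mu)) l <= 1.
Proof. induction l; simpl; intros H. lra. apply NoDup_cons_iff in H as [H1 H2].
unfold delta at 1; destruct excluded_middle_informative.
- subst. rewrite Cabs_C1. rewrite fold_delta0 by auto. lra.
- rewrite Cabs_C0. specialize (IHl H2). unfold rsum in *. lra. Qed.

Section T.
Variable A : SeqAlg.
Variable P : NModule A.
Variable n : nat.
Variable L : Type.
Variable T : (L -> Cpx) -> P.
Hypothesis HT : isometric_ident P n L T.

Lemma T_range_same h : fin_supp h -> act (pn n) (T h) = T h.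
Proof. intro Hh. destruct HT as (_&_&H3&_). destruct (H3 h Hh) as [x ->]. apply act_idem. Qed.
Lemma T_range_diff m h : fin_supp h -> m <> n -> act (pn m) (T h) = vzero.
Proof. intros Hh Hm. destruct HT as (_&_&H3&_). destruct (H3 h Hh) as [x ->]. apply act_orth; auto. Qed.
Lemma T_delta_norm v : vnorm (T (delta v)) <= 1.
Proof. destruct HT as (_&_&_&_&H5). destruct (H5 _ (delta_fs v)) as (l&Hnd&_&Hr).
rewrite Hr. apply (fold_delta1 v l Hnd). Qed.
Lemma T_sdelta c v : T (fun mu => Cmult c (delta v mu)) = vscal c (T (delta v)).
Proof. destruct HT as (_&H2&_). apply H2, delta_fs. Qed.
Lemma T_zero : T (fun _ => C0) = vzero.
Proof. destruct HT as (_&H2&_). transitivity (T (fun nu => Cmult C0 ((fun _ => C0) nu))).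
f_equal. apply functional_extensionality; intro; unfold Cmult, C0; simpl; f_equal; ring.
rewrite H2 by apply zero_fs. apply vscal_C0. Qed.

Lemma vsum_ext {V : NSpace} {K} (F G : K -> V) l : (forall v, In v l -> F v = G v) ->
  vsum F l = vsum G l.
Proof. induction l; simpl; intros H; auto. rewrite H by (left; auto). f_equal.
apply IHl; intros; apply H; right; auto. Qed.

Lemma decomp l : NoDup l -> forall f, (forall v, f v <> C0 -> In v l) ->
  T f = vsum (fun v => T (fun mu => Cmult (f v) (delta v mu))) l.
Proof. induction l; intros Hnd f Hf; simpl.
- rewrite <- T_zero. f_equal. apply functional_extensionality; intro mu.
  destruct (classic (f mu = C0)); auto. destruct (Hf mu H).
- apply NoDup_cons_iff in Hnd as [Hna Hnd].
  set (f' := fun mu => if excluded_middle_informative (mu = a) then C0 else f mu).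
  transitivity (T (fun mu => Cplus (Cmult (f a) (delta a mu)) (f' mu))).
  { f_equal. apply functional_extensionality; intro mu. unfold f', delta.
    destruct excluded_middle_informative; [subst|];
    unfold Cplus, Cmult, C1, C0; apply injective_projections; simpl; ring. }
  destruct HT as (H1&_).
  assert (Hf'fs : fin_supp f').
  { exists l. intros v Hv. unfold f' in Hv. destruct excluded_middle_informative. contradiction.
    destruct (Hf v Hv); [subst; contradiction | auto]. }
  rewrite H1 by (auto using sdelta_fs). f_equal.
  rewrite (IHl Hnd f').
  + apply vsum_ext. intros v Hv. unfold f'. destruct excluded_middle_informative; [subst; contradiction|auto].
  + intros v Hv. unfold f' in Hv. destruct excluded_middle_informative. contradiction.
    destruct (Hf v Hv); [subst; contradiction | auto].
Qed.
End T.

Lemma exists_max {K} (l : list K) (Q : K -> Prop) (h : K -> R) :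
  (exists v, In v l /\ Q v) -> exists v, In v l /\ Q v /\ forall u, In u l -> Q u -> h u <= h v.
Proof. induction l as [|a l IH]; intros [v [Hv HQ]]. destruct Hv.
destruct (classic (exists v, In v l /\ Q v)) as [He|Hne].
- destruct (IH He) as (b&Hb&HQb&Hmax).
  destruct (classic (Q a /\ h b < h a)) as [[HQa Hlt]|Hn].
  + exists a. split; [left; auto|split; auto]. intros u [<-|Hu] HQu. lra.
    specialize (Hmax u Hu HQu); lra.
  + exists b. split; [right; auto|split; auto]. intros u [<-|Hu] HQu; auto.
    apply Rnot_lt_le. intro; apply Hn; auto.
- destruct Hv as [->|Hv]; [|exfalso; apply Hne; eauto].
  exists v. split; [left; auto|split; auto]. intros u [->|Hu] HQu. lra.
  exfalso; apply Hne; eauto.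
Qed.

Section S.
Variable A : SeqAlg.
Variables P X : NModule A.
Variable phi : P -> X.
Hypothesis Hadd : forall x y, phi (vadd x y) = vadd (phi x) (phi y).
Hypothesis Hscal : forall c x, phi (vscal c x) = vscal c (phi x).
Variable Lam : nat -> Type.
Variable T : forall n, (Lam n -> Cpx) -> P.
Hypothesis HT : forall n, isometric_ident P n (Lam n) (T n).

Lemma phi_zero : phi vzero = vzero.
Proof. transitivity (phi (vscal C0 vzero)). rewrite vscal_C0; auto.
rewrite Hscal. apply vscal_C0. Qed.
Lemma phi_vsum {K} (F : K -> P) l : phi (vsum F l) = vsum (fun v => phi (F v)) l.
Proof. induction l; simpl. apply phi_zero. rewrite Hadd, IHl. auto. Qed.

Lemma single n (x : P) : exists y : P,
 (forall m, m <> n -> act (pn m) y = act (pn m) x) /\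
 (act (pn n) y = vzero \/ exists (v : Lam n) c, act (pn n) y = vscal c (T n (delta v))) /\
 vnorm (act (pn n) y) <= vnorm (act (pn n) x) /\
 vnorm (phi x) <= vnorm (phi y).
Proof.
destruct (HT n) as (H1&H2&H3&H4&H5).
destruct (H4 x) as (f&Hfs&Hf).
destruct (H5 f Hfs) as (l&Hnd&Hcov&Hs).
set (xn := act (pn n) x) in *.
set (s := vnorm xn).
set (a := fun v => Cabs (f v)).
assert (Hs' : s = rsum a l) by (unfold s; rewrite <- Hf; exact Hs).
clear Hs.
destruct (Rle_lt_dec s 0) as [Hs0|Hspos].
{ exists x. split; [auto|]. split; [left|split; apply Rle_refl].
  apply vnorm_eq0. pose proof (vnorm_nonneg _ xn). unfold s, xn in *. lra. }
set (g := fun v => T n (fun mu => Cmult (f v) (delta v mu))).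
set (w := vadd x (vscal (-1,0) xn)).
set (y := fun v => vadd w (vscal (s / a v, 0) (g v))).
set (h := fun v => vnorm (phi (y v))).
assert (Hex : exists v, In v l /\ a v > 0).
{ apply NNPP; intro Hne.
  assert (rsum a l <= rsum (fun _ => 1) l * 0).
  { apply rsum_bound. intros v Hv. apply Rnot_lt_le. intro. apply Hne; exists v; split; auto; lra. }
  lra. }
destruct (exists_max l (fun v => a v > 0) h Hex) as (v0&Hv0&Ha0&Hmax).
exists (y v0).
assert (Hg : forall v, g v = vscal (f v) (T n (delta v))).
{ intro v; unfold g; apply (T_sdelta _ _ n _ _ (HT n)). }
split; [|split; [|split]].
- intros m Hm. unfold y, w. rewrite !act_vadd, !act_vscal.
  unfold xn. rewrite act_orth by auto. unfold g. rewrite (T_range_diff _ _ n _ _ (HT n)) by (auto using sdelta_fs).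
  rewrite !vscal_zero, !vadd_0. auto.
- right. exists v0, (Cmult (s / a v0, 0) (f v0)).
  unfold y, w. rewrite !act_vadd, !act_vscal. unfold xn. rewrite act_idem.
  rewrite vminus_self, vadd_0l. unfold g. rewrite (T_range_same _ _ n _ _ (HT n)) by (auto using sdelta_fs).
  rewrite (T_sdelta _ _ n _ _ (HT n)). apply vscal_assoc.
- unfold y, w. rewrite !act_vadd, !act_vscal. unfold xn. rewrite act_idem.
  rewrite vminus_self, vadd_0l. unfold g. rewrite (T_range_same _ _ n _ _ (HT n)) by (auto using sdelta_fs).
  rewrite (T_sdelta _ _ n _ _ (HT n)). rewrite !vnorm_scal, Cabs_real. fold s.
  rewrite Rabs_pos_eq by (apply Rlt_le, Rdiv_lt_0_compat; lra).
  pose proof (T_delta_norm _ _ n _ _ (HT n) v0). pose proof (vnorm_nonneg _ (T n (delta v0))).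
  fold (a v0). replace (s / a v0 * (a v0 * vnorm (T n (delta v0)))) with (s * vnorm (T n (delta v0))) by (field; lra).
  nra.
- assert (Hx : x = vadd w xn) by (unfold w; symmetry; apply vsplit).
  assert (Hxn : xn = vsum g l) by (rewrite <- Hf; apply (decomp _ _ n _ _ (HT n)); auto).
  apply Rmult_le_reg_l with s; auto.
  assert (E1 : s * vnorm (phi x) = vnorm (vscal (s,0) (phi x))).
  { rewrite vnorm_scal, Cabs_real, Rabs_pos_eq; lra. }
  rewrite E1. clear E1.
  rewrite Hx at 1. rewrite Hadd, Hxn, phi_vsum, vscal_distr_v, vscal_sum.
  pose proof (key X a s (fun v => phi (g v)) (phi w) l) as K. rewrite <- Hs' in K.
  rewrite K. eapply Rle_trans. apply vnorm_sum.
  replace (s * vnorm (phi (y v0))) with (rsum a l * vnorm (phi (y v0))) by (rewrite Hs'; auto). apply rsum_bound. intros v Hv.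
  destruct (Rle_lt_dec (a v) 0) as [Hav|Hav].
  + assert (Ha : a v = 0) by (pose proof (sqrt_pos (fst (f v) * fst (f v) + snd (f v) * snd (f v))); unfold a, Cabs in *; lra).
    assert (Hgv : g v = vzero).
    { apply vnorm_eq0. rewrite Hg, vnorm_scal. fold (a v). rewrite Ha. ring. }
    rewrite Ha, Hgv, phi_zero, vscal_zero, vadd_0. change (0,0) with C0. rewrite vscal_C0, vnorm_zero. lra.
  + assert (Et : vadd (vscal (a v, 0) (phi w)) (vscal (s, 0) (phi (g v))) = vscal (a v, 0) (phi (y v))).
    { unfold y. rewrite Hadd, Hscal, vscal_distr_v, vscal_assoc.
      f_equal. f_equal. unfold Cmult; simpl; f_equal; field; lra. }
    rewrite Et, vnorm_scal, Cabs_real, Rabs_pos_eq by lra.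
    apply Rmult_le_compat_l. lra. apply (Hmax v Hv Hav).
Qed.
End S.

Section R.
Variable A : SeqAlg.
Variables P X : NModule A.
Variable phi : P -> X.
Hypothesis Hadd : forall x y, phi (vadd x y) = vadd (phi x) (phi y).
Hypothesis Hscal : forall c x, phi (vscal c x) = vscal c (phi x).
Variable Lam : nat -> Type.
Variable T : forall n, (Lam n -> Cpx) -> P.
Hypothesis HT : forall n, isometric_ident P n (Lam n) (T n).

Definition good (z : P) m := act (pn m) z = vzero \/
  exists (v : Lam m) c, act (pn m) z = vscal c (T m (delta v)).

Lemma chain k : forall x : P, exists z : P,
  (forall m, vnorm (act (pn m) z) <= vnorm (act (pn m) x)) /\
  (forall m, (m < k)%nat -> good z m) /\
  (forall m, (k <= m)%nat -> act (pn m) z = act (pn m) x) /\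
  vnorm (phi x) <= vnorm (phi z).
Proof. induction k; intros x.
- exists x. repeat split; intros; try lia; try apply Rle_refl; auto.
- destruct (IHk x) as (z&Z1&Z2&Z3&Z4).
  destruct (single A P X phi Hadd Hscal Lam T HT k z) as (y&Y1&Y2&Y3&Y4).
  exists y. split; [|split; [|split]].
  + intro m. destruct (Nat.eq_dec m k). subst. eapply Rle_trans; eauto.
    rewrite Y1 by auto. auto.
  + intros m Hm. destruct (Nat.eq_dec m k). subst. exact Y2.
    unfold good. rewrite Y1 by auto. apply Z2; lia.
  + intros m Hm. rewrite Y1 by lia. apply Z3; lia.
  + lra.
Qed.

Lemma reduce (Hhom : homogeneous P) (Hfin : finite_type P) (x : P) : exists z : P,
  vnorm z <= vnorm x /\ (forall m, good z m) /\ vnorm (phi x) <= vnorm (phi z).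
Proof. destruct (Hfin x) as [N HN]. destruct (chain N x) as (z&Z1&Z2&Z3&Z4).
exists z. split; [apply Hhom; auto|split; auto].
intro m. destruct (Nat.lt_ge_cases m N). auto. left. rewrite Z3 by auto. auto. Qed.
End R.

Lemma normalize A (P : NModule A) Lam T (z : P) : z <> vzero -> (forall m, good A P Lam T z m) ->
  ES P Lam T (vscal (/ vnorm z, 0) z) /\ z = vscal (vnorm z, 0) (vscal (/ vnorm z, 0) z).
Proof. intros Hz Hg. assert (Hp : vnorm z > 0).
{ destruct (vnorm_nonneg _ z). auto. exfalso; apply Hz, vnorm_eq0; auto. }
split; [split|].
- rewrite vnorm_scal, Cabs_real, Rabs_pos_eq. field; lra. apply Rlt_le, Rinv_0_lt_compat; lra.
- intro n. rewrite act_vscal. destruct (Hg n) as [H|(v&c&H)]; rewrite H.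
  left; apply vscal_zero. right. exists v, (Cmult (/ vnorm z, 0) c). apply vscal_assoc.
- rewrite vscal_assoc. transitivity (vscal C1 z). symmetry; apply vscal_1.
  f_equal. unfold Cmult, C1; simpl; f_equal; field; lra.
Qed.

Theorem mainTheorem19 (A : SeqAlg) (P : NModule A)
  (Hnz : exists x : P, x <> vzero)
  (Hhom : homogeneous P) (Hfin : finite_type P)
  (Lam : nat -> Type) (T : forall n, (Lam n -> Cpx) -> P)
  (HT : forall n, isometric_ident P n (Lam n) (T n)) :
  forall (X : NModule A) (phi : P -> X), is_bounded_morphism P X phi ->
  forall M : R,
    is_lub (fun r => exists x : P, vnorm x <= 1 /\ r = vnorm (phi x)) M <->
    is_lub (fun r => exists z : P, ES P Lam T z /\ r = vnorm (phi z)) M.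
Proof.
intros X phi (Hadd&Hscal&_&_) M.
assert (Hne : exists z, ES P Lam T z).
{ destruct Hnz as [x Hx].
  destruct (reduce A P P (fun x => x) (fun _ _ => eq_refl) (fun _ _ => eq_refl) Lam T HT Hhom Hfin x)
    as (z&_&Zg&Zn).
  assert (z <> vzero).
  { intro E. subst. rewrite vnorm_zero in Zn. apply Hx, vnorm_eq0.
    pose proof (vnorm_nonneg _ x). lra. }
  destruct (normalize A P Lam T z H Zg) as [H1 _]. eauto. }
assert (Core : forall b, (forall z, ES P Lam T z -> vnorm (phi z) <= b) ->
   forall x, vnorm x <= 1 -> vnorm (phi x) <= b).
{ intros b Hb x Hx.
  assert (b0 : 0 <= b) by (destruct Hne as [z0 Hz0]; pose proof (vnorm_nonneg _ (phi z0)); specialize (Hb z0 Hz0); lra).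
  destruct (reduce A P X phi Hadd Hscal Lam T HT Hhom Hfin x) as (z&Z1&Zg&Zn).
  destruct (classic (z = vzero)) as [E|E].
  - subst. rewrite (phi_zero A P X phi Hscal), vnorm_zero in Zn. lra.
  - destruct (normalize A P Lam T z E Zg) as [H1 H2].
    rewrite H2, Hscal, vnorm_scal, Cabs_real, Rabs_pos_eq in Zn by apply vnorm_nonneg.
    specialize (Hb _ H1). pose proof (vnorm_nonneg _ z). pose proof (vnorm_nonneg _ (phi (vscal (/ vnorm z, 0) z))).
    nra. }
assert (Sub : forall r, (exists z, ES P Lam T z /\ r = vnorm (phi z)) ->
                     exists x : P, vnorm x <= 1 /\ r = vnorm (phi x)).
{ intros r (z&(Hz1&_)&->). exists z. split; auto. lra. }
split; intros [Hub Hl]; split.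
- intros r Hr. apply Hub, Sub, Hr.
- intros b Hb. apply Hl. intros r (x&Hx&->). apply Core; auto.
  intros z Hz. apply Hb. eauto.
- intros r (x&Hx&->). apply Core; auto. intros z Hz. apply Hub. eauto.
- intros b Hb. apply Hl. intros r Hr. apply Hb, Sub, Hr.
Qed.
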